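(* Let $H$ be a complex Hilbert space, $\varphi,\psi:[0,1]\to\mathbb{R}$ continuous, $A\in\mathbb{B}(H)$ and $t\in[0,1]$. Then $$\omega_t^2(\varphi,\psi;A)\le\big(|\varphi(t)|^2+|\psi(t)|^2\big)\omega^2(A)+|\varphi(t)\psi(t)|\,\omega(A^2)+\frac12|\varphi(t)\psi(t)|\,\|AA^*+A^*A\|.$$
   Context: $S_1(H)$ is the unit sphere of $H$, $\omega(T)=\sup_{x\in S_1(H)}|\langle Tx,x\rangle|$, and $\omega_t(\varphi,\psi;A)=\sup_{x\in S_1(H)}|\langle(\varphi(t)A+\psi(t)A^* )x,x\rangle|$. *)

(* Defs.v *)
From HB Require Import structures.
From mathcomp Require Import all_boot all_order all_algebra.
From mathcomp Require Import all_classical all_reals all_analysis.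
From mathcomp Require Import complex.
Set Implicit Arguments. Unset Strict Implicit. Unset Printing Implicit Defensive.
Import numFieldNormedType.Exports.
Import Order.TTheory GRing.Theory Num.Theory.
Local Open Scope ring_scope.
Local Open Scope classical_set_scope.

Section Hilbert.
Variable R : realType.
Variable V : lmodType R[i].
Variable ip : V -> V -> R[i].   (* <x, y>, linear in x, conjugate-linear in y *)

Definition is_inner_product : Prop :=
  [/\ forall x y z, ip (x + y) z = ip x z + ip y z,
      forall (a : R[i]) x y, ip (a *: x) y = a * ip x y,
      forall x y, ip y x = conjc (ip x y),
      forall x, 0 <= ip x x
    & forall x, ip x x = 0 -> x = 0].

Definition hnorm (x : V) : R := Num.sqrt (complex.Re (ip x x)).

Definition hcomplete : Prop :=
  forall u : nat -> V,
    (forall e : R, 0 < e -> exists N : nat, forall m n : nat,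
        (N <= m)%N -> (N <= n)%N -> hnorm (u m - u n) < e) ->
    exists l : V, forall e : R, 0 < e -> exists N : nat, forall n : nat,
        (N <= n)%N -> hnorm (u n - l) < e.

Definition is_hilbert : Prop := is_inner_product /\ hcomplete.

Definition bounded_op (A : V -> V) : Prop :=
  [/\ forall x y, A (x + y) = A x + A y,
      forall (a : R[i]) x, A (a *: x) = a *: A x
    & exists M : R, forall x, hnorm (A x) <= M * hnorm x].

Definition is_adjoint (A B : V -> V) : Prop :=
  forall x y, ip (A x) y = ip x (B y).

Definition unit_sphere : set V := [set x | hnorm x = 1].

Definition numrad (T : V -> V) : R :=
  sup [set Normc.normc (ip (T x) x) | x in unit_sphere].

Definition opnorm (T : V -> V) : R :=
  sup [set hnorm (T x) | x in unit_sphere].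

Definition omega_t (phi psi : R -> R) (A Astar : V -> V) (t : R) : R :=
  sup [set Normc.normc
             (ip (Complex (phi t) 0 *: A x + Complex (psi t) 0 *: Astar x) x)
      | x in unit_sphere].

End Hilbert.

(* Main.v *)
Require Import Defs.
From HB Require Import structures.
From mathcomp Require Import all_boot all_order all_algebra.
From mathcomp Require Import all_classical all_reals all_analysis.
From mathcomp Require Import complex ring lra.
Import numFieldNormedType.Exports.
Import Order.TTheory GRing.Theory Num.Theory.
Local Open Scope ring_scope.
Local Open Scope classical_set_scope.
Set Implicit Arguments. Unset Strict Implicit.

Lemma cReD (R : realType) (u v : R[i]) : complex.Re (u + v) = complex.Re u + complex.Re v.
Proof. by case: u => a b; case: v => c d. Qed.
Lemma cImD (R : realType) (u v : R[i]) : complex.Im (u + v) = complex.Im u + complex.Im v.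
Proof. by case: u => a b; case: v => c d. Qed.
Lemma cReN (R : realType) (u : R[i]) : complex.Re (- u) = - complex.Re u.
Proof. by case: u => a b. Qed.
Lemma cImN (R : realType) (u : R[i]) : complex.Im (- u) = - complex.Im u.
Proof. by case: u => a b. Qed.
Lemma cReM (R : realType) (u v : R[i]) : complex.Re (u * v) = complex.Re u * complex.Re v - complex.Im u * complex.Im v.
Proof. by case: u => a b; case: v => c d. Qed.
Lemma cImM (R : realType) (u v : R[i]) : complex.Im (u * v) = complex.Re u * complex.Im v + complex.Im u * complex.Re v.
Proof. by case: u => a b; case: v => c d. Qed.
Lemma cReJ (R : realType) (u : R[i]) : complex.Re (conjc u) = complex.Re u.
Proof. by case: u => a b. Qed.
Lemma cImJ (R : realType) (u : R[i]) : complex.Im (conjc u) = - complex.Im u.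
Proof. by case: u => a b. Qed.
Lemma cReC (R : realType) (a b : R) : complex.Re (Complex a b) = a. Proof. by []. Qed.
Lemma cImC (R : realType) (a b : R) : complex.Im (Complex a b) = b. Proof. by []. Qed.
Lemma cRe1 (R : realType) : complex.Re (1 : R[i]) = 1. Proof. by []. Qed.
Lemma cIm1 (R : realType) : complex.Im (1 : R[i]) = 0. Proof. by []. Qed.
Lemma cnormc (R : realType) (u : R[i]) : Normc.normc u = Num.sqrt (complex.Re u ^+ 2 + complex.Im u ^+ 2).
Proof. by case: u. Qed.
Lemma cnormc_sq (R : realType) (u : R[i]) : Normc.normc u ^+ 2 = complex.Re u ^+ 2 + complex.Im u ^+ 2.
Proof. by rewrite cnormc sqr_sqrtr // addr_ge0 // sqr_ge0. Qed.
Lemma cnormc_ge0 (R : realType) (u : R[i]) : 0 <= Normc.normc u.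
Proof. by rewrite cnormc sqrtr_ge0. Qed.


Lemma sq_le_sqrt (R : realType) (a b : R) : 0 <= a -> a ^+ 2 <= b -> a <= Num.sqrt b.
Proof. move=> a0 ab; rewrite -(ger0_norm a0) -sqrtr_sqr; exact: ler_wsqrtr. Qed.
Lemma cReR (R : realType) (a : R) : complex.Re (a%:C)%C = a. Proof. by []. Qed.
Lemma cImR (R : realType) (a : R) : complex.Im (a%:C)%C = 0. Proof. by []. Qed.
Definition cE := (cReD, cImD, cReN, cImN, cReM, cImM, cReJ, cImJ, cReC, cImC, cRe1, cIm1, cReR, cImR).
Lemma cext (R : realType) (u v : R[i]) : complex.Re u = complex.Re v -> complex.Im u = complex.Im v -> u = v.
Proof. by case: u => a b; case: v => c d /= -> ->. Qed.
Lemma cJD (R : realType) (u v : R[i]) : conjc (u + v) = conjc u + conjc v.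
Proof. apply: cext; rewrite !cE; lra. Qed.
Lemma cJN (R : realType) (u : R[i]) : conjc (- u) = - conjc u.
Proof. apply: cext; rewrite !cE; lra. Qed.
Lemma cJM (R : realType) (u v : R[i]) : conjc (u * v) = conjc u * conjc v.
Proof. apply: cext; rewrite !cE; lra. Qed.

Section IP.
End IP.

Lemma ipDr (R : realType) (V : lmodType R[i]) (ip : V -> V -> R[i])
  (Hip : is_inner_product ip) z x y : ip z (x + y) = ip z x + ip z y.
Proof. case: Hip => ipD ipZ ipC _ _. by rewrite ipC ipD cJD -!ipC. Qed.
Lemma ipNl (R : realType) (V : lmodType R[i]) (ip : V -> V -> R[i])
  (Hip : is_inner_product ip) x y : ip (- x) y = - ip x y.
Proof. case: Hip => ipD ipZ ipC _ _. by rewrite -scaleN1r ipZ mulN1r. Qed.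
Lemma ipBl (R : realType) (V : lmodType R[i]) (ip : V -> V -> R[i])
  (Hip : is_inner_product ip) x y z : ip (x - y) z = ip x z - ip y z.
Proof. have := Hip; case=> ipD _ _ _ _. by rewrite ipD (ipNl Hip). Qed.
Lemma ipNr (R : realType) (V : lmodType R[i]) (ip : V -> V -> R[i])
  (Hip : is_inner_product ip) x y : ip x (- y) = - ip x y.
Proof. have := Hip; case=> ipD ipZ ipC _ _. by rewrite ipC (ipNl Hip) cJN -ipC. Qed.
Lemma ipBr (R : realType) (V : lmodType R[i]) (ip : V -> V -> R[i])
  (Hip : is_inner_product ip) x y z : ip z (x - y) = ip z x - ip z y.
Proof. by rewrite (ipDr Hip) (ipNr Hip). Qed.
Lemma ipZr (R : realType) (V : lmodType R[i]) (ip : V -> V -> R[i])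
  (Hip : is_inner_product ip) a x y : ip x (a *: y) = conjc a * ip x y.
Proof. have := Hip; case=> ipD ipZ ipC _ _. by rewrite ipC ipZ cJM -ipC. Qed.
Lemma ipIm (R : realType) (V : lmodType R[i]) (ip : V -> V -> R[i])
  (Hip : is_inner_product ip) x : complex.Im (ip x x) = 0.
Proof. have := Hip; case=> _ _ _ ipP _. exact: ger0_Im. Qed.
Lemma ipRe (R : realType) (V : lmodType R[i]) (ip : V -> V -> R[i])
  (Hip : is_inner_product ip) x : 0 <= complex.Re (ip x x).
Proof. have := Hip; case=> _ _ _ ipP _. by move: (ipP x); rewrite lecE => /andP[]. Qed.
Lemma ipReC (R : realType) (V : lmodType R[i]) (ip : V -> V -> R[i])
  (Hip : is_inner_product ip) x y : complex.Re (ip y x) = complex.Re (ip x y).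
Proof. have := Hip; case=> _ _ ipC _ _. by rewrite ipC cReJ. Qed.
Lemma ipImC (R : realType) (V : lmodType R[i]) (ip : V -> V -> R[i])
  (Hip : is_inner_product ip) x y : complex.Im (ip y x) = - complex.Im (ip x y).
Proof. have := Hip; case=> _ _ ipC _ _. by rewrite ipC cImJ. Qed.

Lemma CS_sq (R : realType) (V : lmodType R[i]) (ip : V -> V -> R[i])
  (Hip : is_inner_product ip) x y :
  Normc.normc (ip x y) ^+ 2 <= complex.Re (ip x x) * complex.Re (ip y y).
Proof.
have H t : 0 <= complex.Re (ip x x) - 2 * t * Normc.normc (ip x y) ^+ 2
   + t ^+ 2 * Normc.normc (ip x y) ^+ 2 * complex.Re (ip y y).
  have := ipRe Hip (x - ((t%:C)%C * ip x y) *: y).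
  have := Hip; case=> ipD ipZ ipC _ _.
  rewrite (ipBl Hip) !(ipBr Hip) !ipZ !(ipZr Hip) [ip y x]ipC cnormc_sq.
  move: (ipIm Hip y) (ipRe Hip y).
  case: (ip x y) => a b; case: (ip y y) => c d /= -> _.
  rewrite !cE /=. move=> h. nra.
set N := Normc.normc (ip x y) ^+ 2 in H *.
have N0 : 0 <= N by rewrite /N sqr_ge0.
have X0 := ipRe Hip x; have Y0 := ipRe Hip y.
set X := complex.Re (ip x x) in H X0 *; set Y := complex.Re (ip y y) in H Y0 *.
have [->|Npos] := eqVneq N 0; first exact: mulr_ge0.
have {}Npos : 0 < N by rewrite lt_def Npos.
have [Y00|Ypos] := eqVneq Y 0.
  have hN : N^-1 * N = 1 by rewrite mulVf ?gt_eqF.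
  have := H ((X + 1) / N); rewrite Y00 mulr0 addr0 => h; nra.
have {}Ypos : 0 < Y by rewrite lt_def Ypos.
have := H Y^-1; have hY : Y^-1 * Y = 1 by rewrite mulVf ?gt_eqF.
have hY1 : 0 < Y^-1 by rewrite invr_gt0.
move=> h.
have e : Y^-1 ^+ 2 * N * Y = Y^-1 * N by field; rewrite gt_eqF.
have h3 : 0 <= X - Y^-1 * N by lra.
have e2 : Y * (X - Y^-1 * N) = X * Y - N by field; rewrite gt_eqF.
have := mulr_ge0 (ltW Ypos) h3; lra.
Qed.

Lemma le_of_sq (R : realType) (a b : R) : 0 <= b -> a ^+ 2 <= b ^+ 2 -> a <= b.
Proof. move=> b0 h; nra. Qed.

Lemma hnorm_ge0 (R : realType) (V : lmodType R[i]) (ip : V -> V -> R[i]) x : 0 <= hnorm ip x.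
Proof. exact: sqrtr_ge0. Qed.

Lemma hnorm_sq (R : realType) (V : lmodType R[i]) (ip : V -> V -> R[i])
  (Hip : is_inner_product ip) x : hnorm ip x ^+ 2 = complex.Re (ip x x).
Proof. by rewrite /hnorm sqr_sqrtr // (ipRe Hip). Qed.

Lemma CS (R : realType) (V : lmodType R[i]) (ip : V -> V -> R[i])
  (Hip : is_inner_product ip) x y :
  Normc.normc (ip x y) <= hnorm ip x * hnorm ip y.
Proof.
apply: le_of_sq; first by rewrite mulr_ge0 // hnorm_ge0.
by rewrite exprMn !(hnorm_sq Hip) (CS_sq Hip).
Qed.

Lemma Re_le_normc (R : realType) (z : R[i]) : complex.Re z <= Normc.normc z.
Proof.
have n0 := cnormc_ge0 z.
have [h|h] := lerP (complex.Re z) 0; first lra.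
apply: le_of_sq => //; rewrite cnormc_sq; have := sqr_ge0 (complex.Im z); lra.
Qed.

Lemma hnorm_triangle (R : realType) (V : lmodType R[i]) (ip : V -> V -> R[i])
  (Hip : is_inner_product ip) u v :
  hnorm ip (u + v) <= hnorm ip u + hnorm ip v.
Proof.
apply: le_of_sq; first by rewrite addr_ge0 // hnorm_ge0.
have := Hip; case=> ipD _ _ _ _.
rewrite (hnorm_sq Hip) ipD !(ipDr Hip) !cE (ipReC Hip u v) -!(hnorm_sq Hip).
have := Re_le_normc (ip u v); have := CS Hip u v; nra.
Qed.

Lemma adj_bound (R : realType) (V : lmodType R[i]) (ip : V -> V -> R[i])
  (Hip : is_inner_product ip) (A As : V -> V) (M : R) :
  is_adjoint ip A As -> 0 <= M -> (forall x, hnorm ip (A x) <= M * hnorm ip x) ->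
  forall y, hnorm ip (As y) <= M * hnorm ip y.
Proof.
move=> adj M0 HM y.
have h1 : hnorm ip (As y) ^+ 2 <= M * hnorm ip (As y) * hnorm ip y.
  rewrite (hnorm_sq Hip) -adj.
  apply: le_trans (Re_le_normc _) _; apply: le_trans (CS Hip _ _) _.
  apply: ler_wpM2r; [exact: hnorm_ge0| exact: HM].
have n0 := hnorm_ge0 ip y; have Mn0 : 0 <= M * hnorm ip y by exact: mulr_ge0.
have [->|hp] := eqVneq (hnorm ip (As y)) 0; first by [].
have {}hp : 0 < hnorm ip (As y) by rewrite lt_def hp hnorm_ge0.
nra.
Qed.

Lemma normc_dbl (R : realType) (z : R[i]) : Normc.normc (z + z) = 2 * Normc.normc z.
Proof.
apply: le_anti; apply/andP; split; apply: le_of_sq;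
  rewrite ?mulr_ge0 ?cnormc_ge0 // exprMn !cnormc_sq !cE; lra.
Qed.

Lemma buzano (R : realType) (V : lmodType R[i]) (ip : V -> V -> R[i])
  (Hip : is_inner_product ip) u v e : complex.Re (ip e e) = 1 ->
  2 * Normc.normc (ip u e * ip e v) <= hnorm ip u * hnorm ip v + Normc.normc (ip u v).
Proof.
move=> e1.
have := Hip; case=> ipD ipZ ipC _ _.
pose c := (ip u e + ip u e) *: e - u.
have hc : complex.Re (ip c c) = complex.Re (ip u u).
  rewrite /c (ipBl Hip) !(ipBr Hip) !ipZ !(ipZr Hip) [ip e u]ipC.
  move: e1 (ipIm Hip e); case: (ip e e) => a b /= -> ->.
  case: (ip u e) => p q. rewrite !cE /=. ring.
have hcv : ip c v = (ip u e + ip u e) * ip e v - ip u v by rewrite /c (ipBl Hip) ipZ.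
have h1 : Normc.normc (ip c v) <= hnorm ip u * hnorm ip v.
  apply: le_of_sq; first by rewrite mulr_ge0 // hnorm_ge0.
  by rewrite exprMn !(hnorm_sq Hip) -hc (CS_sq Hip).
have h2 := le_normcD (ip c v) (ip u v).
rewrite hcv mulrDl in h1. rewrite hcv subrK mulrDl normc_dbl in h2. lra.
Qed.

Unset Implicit Arguments. Set Strict Implicit.

Theorem theorem3p11 (R : realType) (V : lmodType R[i]) (ip : V -> V -> R[i])
  (HV : is_hilbert ip) (phi psi : R -> R)
  (cphi : {within `[0, 1], continuous phi})
  (cpsi : {within `[0, 1], continuous psi})
  (A Astar : V -> V) (HA : bounded_op ip A) (HAstar : is_adjoint ip A Astar)
  (t : R) (ht : t \in `[0, 1]) :
  omega_t ip phi psi A Astar t ^+ 2 <=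
    (`|phi t| ^+ 2 + `|psi t| ^+ 2) * numrad ip A ^+ 2
    + `|phi t * psi t| * numrad ip (A \o A)
    + 2^-1 * `|phi t * psi t| * opnorm ip (fun x => A (Astar x) + Astar (A x)).
Proof.
case: HV => Hip _.
case: HA => _ _ [M HM].
have adj := HAstar.
have := Hip; case=> ipD ipZ ipC _ _.
pose T := fun x => A (Astar x) + Astar (A x).
have [[x0 hx0]|hne] := pselect (exists x, unit_sphere ip x); last first.
  have S0 : unit_sphere ip = set0.
    by rewrite -subset0 => x hx; apply: hne; exists x.
  by rewrite /omega_t /numrad /opnorm S0 !image_set0 sup0 expr0n /= !mulr0 !addr0.
have M0 : 0 <= M.
  have := HM x0; rewrite hx0 mulr1; have := hnorm_ge0 ip (A x0); lra.
have unit1 x : unit_sphere ip x -> complex.Re (ip x x) = 1.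
  by move=> hx; rewrite -(hnorm_sq Hip) hx expr1n.
have HMs := adj_bound Hip adj M0 HM.
have B1 x : unit_sphere ip x -> Normc.normc (ip (A x) x) <= M.
  move=> hx; apply: le_trans (CS Hip _ _) _; rewrite hx mulr1.
  by have := HM x; rewrite hx mulr1.
have B2 x : unit_sphere ip x -> Normc.normc (ip ((A \o A) x) x) <= M * M.
  move=> hx; apply: le_trans (CS Hip _ _) _; rewrite hx mulr1 /=.
  apply: le_trans (HM _) _; apply: ler_wpM2l => //.
  by have := HM x; rewrite hx mulr1.
have B3 x : unit_sphere ip x -> hnorm ip (T x) <= M * M + M * M.
  move=> hx; apply: le_trans (hnorm_triangle Hip _ _) _.
  apply: lerD.
    apply: le_trans (HM _) _; apply: ler_wpM2l => //.
    by have := HMs x; rewrite hx mulr1.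
  apply: le_trans (HMs _) _; apply: ler_wpM2l => //.
  by have := HM x; rewrite hx mulr1.
have ub1 : has_ubound [set Normc.normc (ip (A x) x) | x in unit_sphere ip].
  by exists M => _ [x hx <-]; exact: B1.
have ub2 : has_ubound [set Normc.normc (ip ((A \o A) x) x) | x in unit_sphere ip].
  by exists (M * M) => _ [x hx <-]; exact: B2.
have ub3 : has_ubound [set hnorm ip (T x) | x in unit_sphere ip].
  by exists (M * M + M * M) => _ [x hx <-]; exact: B3.
have W1 x : unit_sphere ip x -> Normc.normc (ip (A x) x) <= numrad ip A.
  by move=> hx; apply: (ub_le_sup ub1); exists x.
have W2 x : unit_sphere ip x -> Normc.normc (ip ((A \o A) x) x) <= numrad ip (A \o A).
  by move=> hx; apply: (ub_le_sup ub2); exists x.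
have W3 x : unit_sphere ip x -> hnorm ip (T x) <= opnorm ip T.
  by move=> hx; apply: (ub_le_sup ub3); exists x.
have w1p : 0 <= numrad ip A by apply: le_trans (W1 _ hx0); exact: cnormc_ge0.
have w2p : 0 <= numrad ip (A \o A) by apply: le_trans (W2 _ hx0); exact: cnormc_ge0.
have w3p : 0 <= opnorm ip T by apply: le_trans (W3 _ hx0); exact: hnorm_ge0.
set w1 := numrad ip A in W1 w1p *.
set w2 := numrad ip (A \o A) in W2 w2p *.
set n := opnorm ip T in W3 w3p *.
have KEY x : unit_sphere ip x ->
    2 * Normc.normc (ip (A x) x) ^+ 2 <= w2 + 2^-1 * n.
  move=> hx.
  have bz := buzano Hip (A x) (Astar x) (unit1 x hx).
  rewrite -adj Normc.normcM -adj in bz.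
  have hT : complex.Re (ip (T x) x) = hnorm ip (A x) ^+ 2 + hnorm ip (Astar x) ^+ 2.
    rewrite /T ipD cReD (adj (Astar x) x) (ipReC Hip x (Astar (A x))) -(adj x (A x)) !(hnorm_sq Hip); lra.
  have hT2 : complex.Re (ip (T x) x) <= n.
    apply: le_trans (Re_le_normc _) _; apply: le_trans (CS Hip _ _) _.
    by rewrite hx mulr1; exact: W3.
  have hc := W2 x hx; rewrite /= in hc.
  have := sqr_ge0 (hnorm ip (A x) - hnorm ip (Astar x)).
  rewrite -expr2 in bz. nra.
pose RHS := (`|phi t| ^+ 2 + `|psi t| ^+ 2) * w1 ^+ 2 + `|phi t * psi t| * w2
    + 2^-1 * `|phi t * psi t| * n.
have Hel x : unit_sphere ip x -> Normc.normc
    (ip (Complex (phi t) 0 *: A x + Complex (psi t) 0 *: Astar x) x) ^+ 2 <= RHS.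
  move=> hx; rewrite ipD !ipZ.
  have ha : ip (Astar x) x = conjc (ip (A x) x) by rewrite ipC -adj.
  rewrite ha.
  have k := KEY x hx; have k1 := W1 x hx; have n0 := cnormc_ge0 (ip (A x) x).
  have s1 : Normc.normc (ip (A x) x) ^+ 2 <= w1 ^+ 2 by nra.
  rewrite cnormc_sq in k s1; rewrite cnormc_sq.
  move: k s1; move: (ip (A x) x) => a k s1.
  rewrite /RHS !real_normK ?num_real //.
  set P := phi t in k s1 *; set Q := psi t in k s1 *.
  have kp := ler_norm (P * Q); have km := ler_norm (- (P * Q)); rewrite normrN in km.
  set K := `|P * Q| in kp km *.
  rewrite !cE.
  set al := complex.Re a in k s1 *; set be := complex.Im a in k s1 *.
  have e1 : (P ^+ 2 + Q ^+ 2) * (al ^+ 2 + be ^+ 2) <= (P ^+ 2 + Q ^+ 2) * w1 ^+ 2.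
    by apply: ler_wpM2l => //; rewrite addr_ge0 // sqr_ge0.
  have K0 : 0 <= K by exact: normr_ge0.
  have e2 : K * (2 * (al ^+ 2 + be ^+ 2)) <= K * (w2 + 2^-1 * n) by exact: ler_wpM2l.
  have a0 := sqr_ge0 al; have b0 := sqr_ge0 be.
  nra.
have ub4 : has_ubound [set Normc.normc
    (ip (Complex (phi t) 0 *: A x + Complex (psi t) 0 *: Astar x) x) | x in unit_sphere ip].
  exists (Num.sqrt RHS) => _ [x hx <-]; exact: sq_le_sqrt (cnormc_ge0 _) (Hel x hx).
have Hsup : omega_t ip phi psi A Astar t <= Num.sqrt RHS.
  apply: ge_sup; first by exists (Normc.normc
    (ip (Complex (phi t) 0 *: A x0 + Complex (psi t) 0 *: Astar x0) x0)); exists x0.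
  by move=> _ [x hx <-]; exact: sq_le_sqrt (cnormc_ge0 _) (Hel x hx).
have Hge : 0 <= omega_t ip phi psi A Astar t.
  apply: le_trans (cnormc_ge0 (ip (Complex (phi t) 0 *: A x0 + Complex (psi t) 0 *: Astar x0) x0)) _.
  by apply: (ub_le_sup ub4); exists x0.
have RHS0 : 0 <= RHS by rewrite /RHS !addr_ge0 ?mulr_ge0 ?invr_ge0 ?addr_ge0 ?sqr_ge0 ?normr_ge0.
have sq := sqr_sqrtr RHS0.
change (omega_t ip phi psi A Astar t ^+ 2 <= RHS).
have := sqrtr_ge0 RHS. nra.
Qed.
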